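(* Suppose all agents are strategic and have complete and perfect information. For any categorial sequential allocation mechanism $f_\mathcal O$, any agent $j$, and any profile, the rank (in $R_j$) of the bundle allocated to agent $j$ in the subgame-perfect Nash equilibrium is at most $n^p+1-\prod_{i=1}^{p}k_{j,i}$.
   Context: Basic categorized domain: $n$ agents, $p$ categories $D_i=\{1,\ldots,n\}$ of indivisible items, bundles $\mathfrak D=D_1\times\cdots\times D_p$; each agent $j$ has a linear order $R_j$ over $\mathfrak D$. The rank of a bundle in $R_j$ is its position (top $=1$, bottom $=n^p$). CSAM $f_\mathcal O$: given a linear order $\mathcal O$ over $\{1,\ldots,n\}\times\{1,\ldots,p\}$, in rounds $t=1,\ldots,np$, if the $t$-th element of $\mathcal O$ is $(j,i)$ then agent $j$ chooses an item $d_{j,i}$ from the items of $D_i$ not yet chosen; all choices are observed by all agents; agent $j$ finally receives $(d_{j,1},\ldots,d_{j,p})$. With strategic agents with complete and perfect information, this is an extensive-form game in which each agent's preference over outcomes is her linear order $R_j$ over her final bundle; its subgame-perfect Nash equilibrium (computed by backward induction) is unique since preferences are linear orders. $k_{j,i}$ denotes the number of items of $D_i$ still available right before agent $j$ chooses from $D_i$, i.e. $n$ minus the number of agents who choose from $D_i$ before $j$ in $\mathcal O$. *)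

(* Defs.v *)
From mathcomp Require Import all_boot.
Set Implicit Arguments. Unset Strict Implicit. Unset Printing Implicit Defensive.

Section CSAM.
Variables (n p : nat).

(* An item of any category D_i = {1..n} is an element of 'I_n;
   a bundle (d_1,...,d_p) is a finite function 'I_p -> 'I_n. *)
Definition bundle := {ffun 'I_p -> 'I_n}.

(* The order O over agents x categories, as the sequence of its elements
   (first element = round 1). *)
Definition is_order (s : seq ('I_n * 'I_p)) := uniq s /\ forall x, x \in s.

(* A linear order R_j over bundles: [R x y] means "x is (weakly) ranked
   above y", i.e. x R_j y. *)
Definition linear_order (R : rel bundle) :=
  [/\ reflexive R, antisymmetric R, transitive R & total R].

(* Rank of b in R: its position, top = 1 (number of bundles weakly above b). *)
Definition rank (R : rel bundle) (b : bundle) : nat := #|[set b' | R b' b]|.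

Variable s : seq ('I_n * 'I_p).

(* A history is the sequence of items chosen in rounds 1..t. *)
Definition mover (h : seq 'I_n) : option ('I_n * 'I_p) := ohead (drop (size h) s).

Definition chosen (h : seq 'I_n) (i : 'I_p) : seq 'I_n :=
  [seq x.1 | x <- zip h s & x.2.2 == i].

Definition available (h : seq 'I_n) (d : 'I_n) : bool :=
  if mover h is Some (_, i) then d \notin chosen h i else false.

Definition legal (h : seq 'I_n) : Prop :=
  forall t (d : 'I_n), t < size h -> available (take t h) (nth d h t).

(* A (pure) strategy profile, with complete and perfect information:
   the mover's choice as a function of the whole history. *)
Definition strategy := seq 'I_n -> 'I_n.

Definition valid (sigma : strategy) : Prop :=
  forall h, legal h -> size h < size s -> available h (sigma h).

Definition play (sigma : strategy) (h : seq 'I_n) : seq 'I_n :=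
  iter (size s - size h) (fun h => rcons h (sigma h)) h.

Definition bundle_of (j : 'I_n) (h : seq 'I_n) : bundle :=
  [ffun i => nth j h (index (j, i) s)].

Definition moves_of (a : 'I_n) (h : seq 'I_n) : bool :=
  if mover h is Some (a', _) then a' == a else false.

Variable R : 'I_n -> rel bundle.

Definition strictly_prefers (a : 'I_n) (x y : bundle) : bool :=
  R a x y && ~~ R a y x.

Definition SPNE (sigma : strategy) : Prop :=
  valid sigma /\
  forall h, legal h -> size h <= size s ->
  forall (a : 'I_n) (sigma' : strategy), valid sigma' ->
    (forall h', ~~ moves_of a h' -> sigma' h' = sigma h') ->
    ~~ strictly_prefers a (bundle_of a (play sigma' h)) (bundle_of a (play sigma h)).

(* k_{j,i}: number of items of D_i still available when j chooses from D_i. *)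
Definition k (j : 'I_n) (i : 'I_p) : nat :=
  n - count (fun x : 'I_n * 'I_p => x.2 == i) (take (index (j, i) s) s).

End CSAM.

(* Main.v *)
Require Import Defs.
From mathcomp Require Import all_boot zify.
From Stdlib Require Import ClassicalEpsilon.
Set Implicit Arguments. Unset Strict Implicit. Unset Printing Implicit Defensive.

Section Aux.
Variables (n p : nat) (s : seq ('I_n * 'I_p)).

Lemma play_end (sg : strategy n) h : size s <= size h -> play s sg h = h.
Proof. by rewrite /play => H; have -> : size s - size h = 0 by lia. Qed.

Lemma play_step (sg : strategy n) h : size h < size s ->
  play s sg h = play s sg (rcons h (sg h)).
Proof.
move=> H; rewrite /play size_rcons.
have -> : size s - size h = (size s - (size h).+1).+1 by lia.
by rewrite iterSr.
Qed.

Lemma play_ext (s1 s2 : strategy n) h :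
  (forall h', size h <= size h' -> s1 h' = s2 h') -> play s s1 h = play s s2 h.
Proof.
move Em: (size s - size h) => m; elim: m h Em => [|m IH] h Em E.
  by rewrite play_end ?(play_end s2) //; lia.
rewrite (play_step s1); last by lia.
rewrite (play_step s2); last by lia.
rewrite E //; apply: IH; first by rewrite size_rcons; lia.
by move=> h' H; apply: E; move: H; rewrite size_rcons; lia.
Qed.

Lemma play_prefix (sg : strategy n) h : exists t, play s sg h = h ++ t.
Proof.
move Em: (size s - size h) => m; elim: m h Em => [|m IH] h Em.
  by exists [::]; rewrite play_end ?cats0 //; lia.
rewrite play_step; last by lia.
have [|t ->] := IH (rcons h (sg h)); first by rewrite size_rcons; lia.
by exists (sg h :: t); rewrite cat_rcons.
Qed.

Lemma legal_nil : legal s [::].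
Proof. by move=> t d. Qed.

Lemma legal_rcons h d : legal s h -> available s h d -> legal s (rcons h d).
Proof.
move=> Hl Ha t d0; rewrite size_rcons ltnS leq_eqVlt => /orP [/eqP ->|Ht].
  by rewrite -cats1 takel_cat ?leqnn // take_size nth_cat ltnn subnn.
by rewrite -cats1 takel_cat ?(ltnW Ht) // nth_cat Ht; apply: Hl.
Qed.

Lemma mover_some x0 h : size h < size s -> mover s h = Some (nth x0 s (size h)).
Proof. by move=> H; rewrite /mover (drop_nth x0 H). Qed.

Lemma mover_size h a : mover s h = Some a -> size h < size s /\ nth a s (size h) = a.
Proof.
case: (ltnP (size h) (size s)) => H.
  by rewrite (mover_some a H) => -[E].
by rewrite /mover drop_oversize.
Qed.

Lemma count_zip (T : Type) (P : pred ('I_n * 'I_p)) (h : seq T) s' :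
  count (fun x => P x.2) (zip h s') = count P (take (size h) s').
Proof. by elim: h s' => [|x h IH] [|y s'] //=; rewrite IH. Qed.

Lemma avail_card h a i : mover s h = Some (a, i) ->
  n - count (fun x : 'I_n * 'I_p => x.2 == i) (take (size h) s)
    <= #|[pred d | available s h d]|.
Proof.
move=> Hm.
set c := chosen s h i.
have -> : #|[pred d | available s h d]| = #|[predC [pred d | d \in c]]|.
  by apply: eq_card => d; rewrite /available Hm !inE.
have := cardC [pred d | d \in c]; rewrite card_ord => E.
have E2 : #|[pred d | d \in c]| <= size c.
  apply: leq_trans (card_size c); apply: subset_leq_card; apply/subsetP => d.
  by rewrite !inE.
have Es : size c = count (fun x : 'I_n * 'I_p => x.2 == i) (take (size h) s).
  by rewrite /c /chosen size_map size_filter (count_zip (fun x => x.2 == i)).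
by rewrite -Es -{1}E leq_subLR leq_add2r.
Qed.

Lemma count_cat_n (i : 'I_p) : is_order s ->
  count (fun x : 'I_n * 'I_p => x.2 == i) s = n.
Proof.
case=> Hu Hf.
have Hp : perm_eq s (enum [set: 'I_n * 'I_p]).
  by apply: uniq_perm => // [|x]; rewrite ?enum_uniq // mem_enum inE Hf.
rewrite (permP Hp) -size_filter.
have -> : [seq x <- enum [set: 'I_n * 'I_p] | x.2 == i] = enum (setX [set: 'I_n] [set i]).
  rewrite /enum_mem -filter_predI; apply: eq_filter => x.
  by rewrite /= !inE andbT; case: x.
by rewrite -cardE cardsX cardsT cards1 card_ord muln1.
Qed.

Lemma index_mover h j i : uniq s -> mover s h = Some (j, i) -> index (j, i) s = size h.
Proof.
move=> Hu /mover_size [H E].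
by rewrite -{1}E index_uniq.
Qed.

Lemma k_mover h j i : uniq s -> mover s h = Some (j, i) ->
  k s j i = n - count (fun x : 'I_n * 'I_p => x.2 == i) (take (size h) s).
Proof. by move=> Hu Hm; rewrite /k (index_mover Hu Hm). Qed.

Lemma avail_pos h a i : is_order s -> mover s h = Some (a, i) ->
  0 < #|[pred d | available s h d]|.
Proof.
move=> Ho Hm; have [H E] := mover_size Hm.
apply: leq_trans (avail_card Hm).
have := count_cat_n i Ho.
set P := (fun x : 'I_n * 'I_p => x.2 == i).
have C : count P s = count P (take (size h) s) + count P (drop (size h) s).
  by rewrite -count_cat cat_take_drop.
have D : count P (drop (size h) s) = 1 + count P (drop (size h).+1 s).
  by rewrite (drop_nth (a,i) H) E /= {1}/P /= eqxx.
lia.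
Qed.

End Aux.
Section Rank.
Variables (n p : nat).

Lemma rank_mono (R : rel (bundle n p)) x y : linear_order R -> R x y -> rank R x <= rank R y.
Proof.
case=> _ _ Htr _ Hxy; apply: subset_leq_card; apply/subsetP => b.
by rewrite !inE => H; apply: Htr Hxy.
Qed.

Lemma rank_le (R : rel (bundle n p)) x y : linear_order R -> rank R x <= rank R y -> R x y.
Proof.
move=> HL; case: (HL) => _ _ Htr Htot Hle.
case Hxy: (R x y) => //.
have Hyx : R y x by move: (Htot x y); rewrite Hxy.
have : rank R y < rank R x.
  apply: proper_card; apply/properP; split.
    by apply/subsetP => b; rewrite !inE => H; apply: Htr Hyx.
  by exists x; rewrite !inE ?Hxy //; case: HL.
by rewrite ltnNge Hle.
Qed.

End Rank.

Lemma mover_lt n p (s : seq ('I_n * 'I_p)) h : size h < size s -> exists a i, mover s h = Some (a, i).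
Proof.
rewrite /mover; case E: (drop (size h) s) => [|[a i] t] H.
  by have := size_drop (size h) s; rewrite E /=; lia.
by exists a, i.
Qed.

Section BI.
Variables (n p : nat) (s : seq ('I_n * 'I_p)) (R : 'I_n -> rel (bundle n p)) (d0 : 'I_n).

Definition best (f : 'I_n -> seq 'I_n) (h : seq 'I_n) : 'I_n :=
  if mover s h is Some (a, i) then
    if [pick d | available s h d] is Some d1 then
      [arg min_(d < d1 | available s h d) rank (R a) (bundle_of s a (f d))]
    else d0
  else d0.

Fixpoint out m h := if m is m'.+1 then out m' (rcons h (best (fun d => out m' (rcons h d)) h)) else h.

Definition bi_sigma : strategy n := fun h => best (fun d => out (size s - size h).-1 (rcons h d)) h.

Lemma play_out h : play s bi_sigma h = out (size s - size h) h.
Proof.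
move Em: (size s - size h) => m; elim: m h Em => [|m IH] h Em.
  by rewrite play_end //; lia.
rewrite play_step; last by lia.
rewrite IH; last by rewrite size_rcons; lia.
by rewrite /= /bi_sigma Em.
Qed.

Lemma best_spec f h a i : is_order s -> mover s h = Some (a, i) ->
  available s h (best f h) /\ forall d, available s h d ->
  rank (R a) (bundle_of s a (f (best f h))) <= rank (R a) (bundle_of s a (f d)).
Proof.
move=> Ho Hm; rewrite /best Hm; case: pickP => [d1 Hd1|H0].
  by case: arg_minnP => // d Hd Hmin; split.
have := avail_pos Ho Hm.
have -> : #|[pred d | available s h d]| = 0 by apply: eq_card0 => d; rewrite inE H0.
by [].
Qed.

Lemma bi_valid : is_order s -> valid s bi_sigma.
Proof.
move=> Ho h _ H; have [a [i Hm]] := mover_lt H.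
by case: (best_spec (fun d => out (size s - size h).-1 (rcons h d)) Ho Hm).
Qed.

Lemma bi_opt : is_order s -> (forall a, linear_order (R a)) ->
  forall m h, size s - size h = m -> legal s h -> size h <= size s ->
  forall a (sg : strategy n), valid s sg ->
  (forall h', ~~ moves_of s a h' -> sg h' = bi_sigma h') ->
  R a (bundle_of s a (play s bi_sigma h)) (bundle_of s a (play s sg h)).
Proof.
move=> Ho HL; elim=> [|m IH] h Em Hl Hs a sg Hv Hag.
  rewrite !play_end; try lia; by case: (HL a).
have Hlt : size h < size s by lia.
have [b [i Hm]] := mover_lt Hlt.
have Em' : forall d, size s - size (rcons h d) = m by move=> d; rewrite size_rcons; lia.
rewrite (play_step bi_sigma) // (play_step sg) //.
case Hba: (b == a).
- move/eqP: Hba => Hba; subst b.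
  have Hd' := Hv h Hl Hlt.
  have H1 := IH (rcons h (sg h)) (Em' _) (legal_rcons Hl Hd') ltac:(rewrite size_rcons; lia) a sg Hv Hag.
  case: (HL a) => _ _ Htr _; apply: Htr H1.
  have [_ Hmin] := best_spec (fun d => out m (rcons h d)) Ho Hm.
  apply: rank_le => //.
  have -> : bi_sigma h = best (fun d => out m (rcons h d)) h by rewrite /bi_sigma Em.
  by rewrite !play_out !Em'; apply: Hmin.
- have Hmv : ~~ moves_of s a h by rewrite /moves_of Hm Hba.
  rewrite (Hag h Hmv).
  apply: IH => //; first by apply: legal_rcons => //; apply: bi_valid.
  by rewrite size_rcons.
Qed.

Lemma bi_SPNE : is_order s -> (forall a, linear_order (R a)) -> SPNE s R bi_sigma.
Proof.
move=> Ho HL; split; first exact: bi_valid.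
move=> h Hl Hs a sg Hv Hag.
rewrite /strictly_prefers negb_and negbK; apply/orP; right.
exact: (bi_opt Ho HL (erefl _) Hl Hs Hv Hag).
Qed.

End BI.

Definition pb (P : Prop) : bool := if excluded_middle_informative P then true else false.
Lemma pbP P : reflect P (pb P).
Proof. by rewrite /pb; case: excluded_middle_informative => H; constructor. Qed.

Lemma card_split (T : finType) (m : nat) (A : {set T}) (g : T -> 'I_m) :
  #|A| = \sum_(d < m) #|[set b in A | g b == d]|.
Proof.
rewrite -sum1_card (partition_big g predT) //=.
apply: eq_bigr => d _; rewrite -sum1_card; apply: eq_bigl => b.
by rewrite !inE.
Qed.

Section RankPart.
Variables (n p : nat) (s : seq ('I_n * 'I_p)) (R : 'I_n -> rel (bundle n p)) (j : 'I_n).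
Variable sigma : strategy n.
Hypothesis Ho : is_order s.
Hypothesis Hsp : SPNE s R sigma.

Definition good h (b : bundle n p) := exists sg, valid s sg /\
  (forall h', ~~ moves_of s j h' -> sg h' = sigma h') /\ bundle_of s j (play s sg h) = b.

Definition Reach h := [set b | pb (good h b)].

Lemma index_lt i : index (j, i) s < size s.
Proof. by rewrite index_mem; case: Ho => _ ->. Qed.

Lemma reach_count : forall m h, size s - size h = m -> legal s h -> size h <= size s ->
  \prod_(i < p | size h <= index (j, i) s) k s j i <= #|Reach h|.
Proof.
elim=> [|m IH] h Em Hl Hs.
  rewrite big_pred0; last first.
    by move=> i; apply/negbTE; rewrite -ltnNge; apply: leq_trans (index_lt i) _; lia.
  apply/card_gt0P; exists (bundle_of s j (play s sigma h)); rewrite inE; apply/pbP.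
  by exists sigma; split; [case: Hsp|split].
have Hlt : size h < size s by lia.
have [b [i0 Hm]] := mover_lt Hlt.
have [_ Enth] := mover_size Hm.
have Em' : forall d, size s - size (rcons h d) = m by move=> d; rewrite size_rcons; lia.
case Hbj: (b == j); last first.
  have Hmv : ~~ moves_of s j h by rewrite /moves_of Hm Hbj.
  have Hv := (Hsp.1).
  have -> : \prod_(i < p | size h <= index (j, i) s) k s j i =
            \prod_(i < p | size (rcons h (sigma h)) <= index (j, i) s) k s j i.
    apply: eq_bigl => i; rewrite size_rcons leq_eqVlt.
    case E: (size h == index (j, i) s) => //=.
    move/eqP: E => E; have := nth_index (b, i0) (Ho.2 (j, i)).
    by rewrite -E Enth => -[Eb _]; rewrite Eb eqxx in Hbj.
  have Hl' := legal_rcons Hl (Hv h Hl Hlt).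
  have := IH (rcons h (sigma h)) (Em' _) Hl'; rewrite size_rcons => /(_ Hlt) H1.
  apply: leq_trans H1 _.
  apply: subset_leq_card; apply/subsetP => b'; rewrite !inE => /pbP [sg [Hsv [Hag Hb]]].
  apply/pbP; exists sg; split => //; split => //.
  by rewrite play_step // (Hag h Hmv).
move/eqP: Hbj => Hbj; subst b.
have Hi0 := index_mover Ho.1 Hm.
rewrite (bigD1 i0) /=; last by rewrite Hi0.
set P' := \prod_(i < p | (size h).+1 <= index (j,i) s) k s j i.
have -> : \prod_(i < p | (size h <= index (j,i) s) && (i != i0)) k s j i = P'.
  apply: eq_bigl => i; case E: (i == i0).
    by move/eqP: E => ->; rewrite Hi0 andbF ltnn.
  rewrite andbT leq_eqVlt; case E2: (size h == index (j, i) s) => //=.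
  move/eqP: E2 => E2; have := nth_index (j, i0) (Ho.2 (j, i)).
  by rewrite -E2 Enth => -[Ei]; rewrite Ei eqxx in E.
rewrite (card_split (Reach h) (fun b => b i0)).
apply: leq_trans (_ : \sum_(d < n | available s h d) #|Reach (rcons h d)| <= _).
  apply: leq_trans (_ : \sum_(d < n | available s h d) P' <= _).
    rewrite sum_nat_const; apply: leq_mul => //.
    by rewrite (k_mover Ho.1 Hm); apply: avail_card Hm.
  apply: leq_sum => d Hd.
  have := IH (rcons h d) (Em' d) (legal_rcons Hl Hd); rewrite size_rcons => /(_ Hlt).
  by [].
rewrite big_mkcond /=; apply: leq_sum => d _; case: ifP => // Hd.
apply: subset_leq_card; apply/subsetP => b'; rewrite !inE => /pbP [sg [Hsv [Hag Hb]]].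
pose sg' : strategy n := fun h' => if h' == h then d else sg h'.
have Hps : play s sg' h = play s sg (rcons h d).
  rewrite play_step // {2}/sg' eqxx; apply: play_ext => h' Hh'.
  rewrite /sg'; case: eqP => // E; move: Hh'; rewrite E size_rcons; lia.
apply/andP; split.
  apply/pbP; exists sg'; split.
    move=> h' Hl' Hs'; rewrite /sg'; case: eqP => [->|_] //; exact: Hsv.
  split; last by rewrite Hps.
  move=> h' Hh'; rewrite /sg'; case: eqP => [E|_]; last exact: Hag.
  by rewrite E /moves_of Hm eqxx in Hh'.
rewrite -Hb /bundle_of ffunE Hi0.
have [t ->] := play_prefix s sg (rcons h d).
by rewrite nth_cat size_rcons ltnSn nth_rcons ltnn eqxx.
Qed.

End RankPart.

Theorem proposition6 (n p : nat) (s : seq ('I_n * 'I_p))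
  (R : 'I_n -> rel (bundle n p)) (j : 'I_n) :
  is_order s -> (forall a, linear_order (R a)) ->
  (exists sigma, SPNE s R sigma) /\
  (forall sigma, SPNE s R sigma ->
     rank (R j) (bundle_of s j (play s sigma [::]))
       <= n ^ p + 1 - \prod_(i < p) k s j i).
Proof.
move=> Ho HL; split; first by exists (bi_sigma s R j); apply: bi_SPNE.
move=> sigma Hsp.
set bs := bundle_of s j (play s sigma [::]).
have Hc := reach_count j Ho Hsp (erefl _) (@legal_nil _ _ s) (leq0n _).
have -> : \prod_(i < p) k s j i = \prod_(i < p | 0 <= index (j, i) s) k s j i.
  by apply: eq_bigl => i; rewrite leq0n.
set B := [set b | R j bs b].
have HB : #|Reach s j sigma [::]| <= #|B|.
  apply: subset_leq_card; apply/subsetP => b; rewrite !inE => /pbP [sg [Hv [Hag Hb]]].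
  have := Hsp.2 [::] (@legal_nil _ _ s) (leq0n _) j sg Hv Hag.
  rewrite Hb /strictly_prefers negb_and negbK => /orP [H|->] //.
  case: (HL j) => _ _ _ Htot; by move: (Htot bs b); rewrite (negbTE H) orbF.
set A := [set b | R j b bs].
have HA : rank (R j) bs = #|A| by [].
have HU := cardsUI A B.
have HI : #|A :&: B| <= 1.
  rewrite -(cards1 bs); apply: subset_leq_card; apply/subsetP => b.
  rewrite !inE => /andP [H1 H2]; case: (HL j) => _ Ha _ _.
  by apply/eqP; apply: Ha; rewrite H1 H2.
have HT : #|A :|: B| <= n ^ p.
  by apply: leq_trans (max_card _) _; rewrite card_ffun !card_ord.
have Hc2 : \prod_(i < p | 0 <= index (j, i) s) k s j i <= #|Reach s j sigma [::]| := Hc.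
rewrite HA; lia.
Qed.
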